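(* The Finsleroid Indicatrix $\{R\in V_N:K(g;R)=1\}$ meets the $Z$-axis $\{q=0\}$ in exactly two points, $Z_2(g)=e^{-G\pi/4}>0$ and $Z_1(g)=-e^{G\pi/4}<0$, and the altitude of the Finsleroid is $$Z_2(g)-Z_1(g)=2\cosh\frac{G\pi}{4}.$$
   Context: Let $N\ge2$, $V_N=\mathbb{R}^N$ with points $R=(R^1,\dots,R^N)$, $Z=R^N$; indices $a,b$ run over $1,\dots,N-1$, repeated indices summed. Fix a symmetric positive-definite matrix $(r_{ab})$, $q(R)=\sqrt{r_{ab}R^aR^b}$. Fix $g\in(-2,2)$, $h=\sqrt{1-g^2/4}$, $G=g/h$. Define $B(g;R)=Z^2+gqZ+q^2$, $A(g;R)=Z+\frac12gq$, $\Phi(g;R)=\arctan(A/(hq))$ for $q>0$ ($\Phi=\pi/2$ if $q=0,Z>0$; $\Phi=-\pi/2$ if $q=0,Z<0$), $J=e^{\frac12G\Phi}$, and the Finsleroid metric function $K(g;R)=\sqrt{B}\,J$ ($K(g;0)=0$). *)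

(* Defs.v *)
From Stdlib Require Import Reals.
From mathcomp Require Import ssreflect ssrbool eqtype ssrnat fintype bigop.
Open Scope R_scope.

(* V_N = R^N, points x : 'I_N -> R.  0-based: paper coordinate R^(i+1) is x i. *)
Definition VN (N : nat) := 'I_N -> R.

Definition coordn {N : nat} (x : VN N) (i : nat) : R :=
  match (insub i : option 'I_N) with Some j => x j | None => 0 end.

Definition Zc {N : nat} (x : VN N) : R := coordn x (N - 1)%nat.

Definition qf {N : nat} (r : 'I_(N - 1) -> 'I_(N - 1) -> R) (x : VN N) : R :=
  sqrt (\big[Rplus/0]_(a < N - 1) \big[Rplus/0]_(b < N - 1)
          (r a b * coordn x a * coordn x b)).

Definition symmetric_mx {n : nat} (r : 'I_n -> 'I_n -> R) : Prop :=
  forall a b, r a b = r b a.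

Definition posdef_mx {n : nat} (r : 'I_n -> 'I_n -> R) : Prop :=
  forall y : 'I_n -> R, (exists a, y a <> 0) ->
    0 < \big[Rplus/0]_(a < n) \big[Rplus/0]_(b < n) (r a b * y a * y b).

Definition hh (g : R) : R := sqrt (1 - g ^ 2 / 4).
Definition GG (g : R) : R := g / hh g.

Definition Bf {N} r (g : R) (x : VN N) : R :=
  Zc x ^ 2 + g * qf r x * Zc x + qf r x ^ 2.
Definition Af {N} r (g : R) (x : VN N) : R := Zc x + / 2 * g * qf r x.

(* Phi; at the origin (q = 0, Z = 0) the value is irrelevant since B = 0 there *)
Definition Phif {N} r (g : R) (x : VN N) : R :=
  if Rlt_dec 0 (qf r x) then atan (Af r g x / (hh g * qf r x))
  else if Rlt_dec 0 (Zc x) then PI / 2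
  else if Rlt_dec (Zc x) 0 then - (PI / 2)
  else 0.

Definition Jf {N} r (g : R) (x : VN N) : R := exp (/ 2 * GG g * Phif r g x).

(* Finsleroid metric function; K(g;0) = sqrt 0 * J = 0 automatically *)
Definition Kf {N} r (g : R) (x : VN N) : R := sqrt (Bf r g x) * Jf r g x.

Definition zaxis_pt (N : nat) (z : R) : VN N :=
  fun i => if (nat_of_ord i == (N - 1)%nat) then z else 0.

(* Main.v *)
Require Import Defs.
From Stdlib Require Import Reals Lra Lia Classical FunctionalExtensionality.
From mathcomp Require Import ssreflect ssrbool eqtype ssrnat fintype bigop.
Open Scope R_scope.

Lemma coordn_lt N (x : VN N) (i : 'I_N) : coordn x i = x i.
Proof.
rewrite /coordn insubT; first exact: ltn_ord.
move=> H; congr (x _); apply: val_inj => //.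
Qed.

Lemma coordn_ge N (x : VN N) (i : nat) : (N <= i)%N -> coordn x i = 0.
Proof. move=> H; rewrite /coordn insubF //; by rewrite ltnNge H. Qed.

Lemma q0_coord N (r : 'I_(N - 1) -> 'I_(N - 1) -> R) (x : VN N) :
  posdef_mx r -> qf r x = 0 -> forall a : 'I_(N - 1), coordn x a = 0.
Proof.
move=> Hp Hq a; apply: NNPP => Hne.
have := Hp (fun a => coordn x a) (ex_intro _ a Hne).
move=> /sqrt_lt_R0; rewrite -/(qf r x) Hq; lra.
Qed.

Lemma q0_axis N (r : 'I_(N - 1) -> 'I_(N - 1) -> R) (x : VN N) :
  posdef_mx r -> qf r x = 0 -> x = zaxis_pt N (Zc x).
Proof.
move=> Hp Hq; apply: functional_extensionality => i.
rewrite /zaxis_pt; case: eqP => Hi.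
- by rewrite /Zc -Hi coordn_lt.
- have Hl : (i < N - 1)%N.
    have := ltn_ord i; move: Hi; clear; move=> Hi Hl.
    apply/ltP; move/ltP: Hl; rewrite -minusE in Hi *; lia.
  have := q0_coord _ _ _ Hp Hq (Ordinal Hl); by rewrite /= coordn_lt.
Qed.

Lemma axis_q N (r : 'I_(N - 1) -> 'I_(N - 1) -> R) z :
  qf r (zaxis_pt N z) = 0.
Proof.
rewrite /qf.
have -> : \big[Rplus/0]_(a < N - 1) \big[Rplus/0]_(b < N - 1)
   (r a b * coordn (zaxis_pt N z) a * coordn (zaxis_pt N z) b) = 0;
  last exact: sqrt_0.
apply: (big_ind (fun v => v = 0)) => //; first by move=> ? ? -> ->; ring.
move=> a _.
apply: (big_ind (fun v => v = 0)) => //; first by move=> ? ? -> ->; ring.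
move=> b _.
have Ha : coordn (zaxis_pt N z) a = 0.
  case: (ltnP a N) => H.
  - have := coordn_lt _ (zaxis_pt N z) (Ordinal H); rewrite /= => ->.
    rewrite /zaxis_pt /=.
    have := ltn_ord a; case: eqP => // -> ; rewrite ltnn //.
  - exact: coordn_ge.
rewrite Ha; ring.
Qed.

Lemma axis_Z N z : (2 <= N)%N -> Zc (zaxis_pt N z) = z.
Proof.
move=> HN.
have H : (N - 1 < N)%N by apply/ltP; move/leP: HN; rewrite -minusE; lia.
rewrite /Zc.
have := coordn_lt _ (zaxis_pt N z) (Ordinal H); rewrite /= => ->.
by rewrite /zaxis_pt /= eqxx.
Qed.

Lemma K_q0 N (r : 'I_(N - 1) -> 'I_(N - 1) -> R) g (x : VN N) :
  qf r x = 0 ->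
  Kf r g x = if Rlt_dec 0 (Zc x) then Zc x * exp (GG g * PI / 4)
             else if Rlt_dec (Zc x) 0 then - Zc x * exp (- (GG g * PI / 4))
             else 0.
Proof.
move=> Hq; rewrite /Kf /Jf /Bf /Phif Hq.
have E : Zc x ^ 2 + g * 0 * Zc x + 0 ^ 2 = Zc x ^ 2 by ring.
rewrite E.
case: Rlt_dec => H0 /=; first lra.
case: Rlt_dec => H1 /=.
- rewrite sqrt_pow2; last lra.
  congr (_ * exp _); field.
case: Rlt_dec => H2 /=.
  have -> : Zc x * (Zc x * 1) = (- Zc x) ^ 2 by ring.
  rewrite sqrt_pow2; last lra.
  congr (_ * exp _); field.
have E2 : Zc x = 0 by lra.
have -> : Zc x * (Zc x * 1) = 0 by rewrite E2; ring.
rewrite sqrt_0; ring.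
Qed.

Theorem theorem2p8 (N : nat) (r : 'I_(N - 1) -> 'I_(N - 1) -> R) (g : R) :
  (2 <= N)%nat -> symmetric_mx r -> posdef_mx r -> -2 < g < 2 ->
  let Z2 := exp (- (GG g * PI / 4)) in
  let Z1 := - exp (GG g * PI / 4) in
  (* the indicatrix meets the Z-axis {q = 0} exactly in the two points Z2, Z1 *)
  (forall x : VN N, Kf r g x = 1 /\ qf r x = 0 <->
     x = zaxis_pt N Z2 \/ x = zaxis_pt N Z1) /\
  0 < Z2 /\ Z1 < 0 /\
  Z2 - Z1 = 2 * cosh (GG g * PI / 4).
Proof.
move=> HN Hs Hp Hg; cbv zeta.
set c := GG g * PI / 4.
have e1 : exp c * exp (- c) = 1 by rewrite -exp_plus; replace (c + - c) with 0 by ring; exact exp_0.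
have p1 := exp_pos c; have p2 := exp_pos (- c).
split; last first.
  split; first exact: exp_pos.
  split; first lra.
  rewrite /cosh; lra.
move=> x; split.
- move=> [HK Hq]; rewrite (q0_axis _ _ _ Hp Hq).
  rewrite (K_q0 _ _ g _ Hq) -/c in HK.
  move: HK; case: Rlt_dec => H0 /= HK.
  + left; congr zaxis_pt.
    apply: (Rmult_eq_reg_r (exp c)); last lra. rewrite HK -e1; ring.
  + move: HK; case: Rlt_dec => H1 /= HK; last lra.
    right; congr zaxis_pt.
    apply: (Rmult_eq_reg_r (exp (- c))); last lra. replace (Zc x * exp (- c)) with (- (- Zc x * exp (- c))) by ring; rewrite HK -e1; ring.
- move=> Hx.
  have Hq : forall z, qf r (zaxis_pt N z) = 0 := axis_q _ r.
  case: Hx => ->; (split; last exact: Hq); rewrite (K_q0 _ _ g _ (Hq _)) axis_Z // -/c.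
  + case: Rlt_dec => H /=; last (exfalso; lra). lra.
  + case: Rlt_dec => H /=; first (exfalso; lra).
    case: Rlt_dec => H' /=; last (exfalso; lra). lra.
Qed.
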